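(* Assume $\Lambda>0$ and let $(g,K,F,E,u,\Theta,\rho,e)$ be a $C^1$ solution of the evolution system (S) on an interval $[0,T)$, with $g$ positive definite, $\rho>0$, $e\ge0$, $\Theta^{00}\ge0$, satisfying the constraints (C1)–(C4) for all $t$, and with $H(0)<0$. Then for all $t\in[0,T)$: $\frac{dH}{dt}\ge K_{ij}K^{ij}-\Lambda\ge\frac13H^2-\Lambda\ge0$, and $$H(0)-\Lambda t\le H(t)<-\sqrt{3\Lambda}.$$
   Context: Setting. $G$ is a three-dimensional connected Lie group of Bianchi type I–VIII, $(e_i)_{i=1,2,3}$ a left-invariant frame with structure constants $C^k_{ij}$ defined by $[e_i,e_j]=C^k_{ij}e_k$ (so $C^k_{ij}=-C^k_{ji}$ and the Jacobi identity holds). $\Lambda\in\mathbb{R}$ is a constant. Latin indices run over $1,2,3$; repeated indices are summed. Unknowns (functions of $t$): a symmetric positive definite matrix $g=(g_{ij})$ with inverse $(g^{ij})$; a symmetric matrix $K=(K_{ij})$; an antisymmetric matrix $F=(F_{ij})$; vectors $E=(E^i)$, $u=(u^i)$; $\Theta=(\Theta^{00},\Theta^{0i})$; a function $\rho>0$; a function $e\ge0$. Derived quantities: $u^0=\sqrt{1+g_{ij}u^iu^j}$, $u_i=g_{ij}u^j$; $H=g^{ij}K_{ij}$; $K^i_j=g^{ik}K_{kj}$, $K^{ij}=g^{ik}g^{jl}K_{kl}$; $F^{ij}=g^{ik}g^{jl}F_{kl}$; $\gamma^l_{ij}=\tfrac12 g^{lk}(-C^m_{jk}g_{im}+C^m_{ki}g_{jm}+C^m_{ij}g_{km})$;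 $R_{ij}=\gamma^l_{lm}\gamma^m_{ji}-\gamma^m_{jl}\gamma^l_{mi}-C^l_{mj}\gamma^m_{li}$, $R=g^{ij}R_{ij}$; $\tau_{00}=\tfrac12 g_{ij}E^iE^j+\tfrac14 g^{ik}g^{jl}F_{kl}F_{ij}$, $\tau_{0j}=-E^kF_{jk}$, $\tau_{ij}=(\tfrac12 g_{ij}g_{kl}-g_{ik}g_{jl})E^kE^l-\tfrac14 g_{ij}g^{km}g^{nl}F_{kl}F_{mn}+g^{kl}F_{ik}F_{jl}$; $\Theta_{00}=\Theta^{00}$, $\Theta_{0j}=-g_{jk}\Theta^{0k}$; $T_{00}=\tfrac43\rho(u^0)^2+\Theta_{00}$, $T_{0j}=-\tfrac43\rho u^0u_j+\Theta_{0j}$, $T_{ij}=\tfrac43\rho u_iu_j+\tfrac13\rho g_{ij}$; $\nabla$ is the Levi-Civita connection of the left-invariant metric $g$, so for left-invariant tensors $\nabla_kK_{ij}=-\gamma^l_{ki}K_{lj}-\gamma^l_{kj}K_{il}$ and $\nabla^iK_{ij}=g^{ik}\nabla_kK_{ij}$. Evolution system (S) (dot $=d/dt$): $\dot g_{ij}=-2K_{ij}$; $\dot K_{ij}=R_{ij}+HK_{ij}-2K^l_jK_{il}-8\pi(\tau_{ij}+T_{ij})+4\pi(-T_{00}+g^{lm}T_{lm})g_{ij}-\Lambda g_{ij}$; $\dot F_{ij}=C^k_{ij}g_{kl}E^l$; $\dot E^i=HE^i-C^j_{jk}E^k\frac{u^i}{u^0}-C^j_{jk}g^{kl}g^{im}F_{lm}-\tfrac12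 C^i_{jk}g^{jl}g^{km}F_{lm}$; $\dot u^i=2K^i_ju^j-\gamma^i_{jk}\frac{u^ju^k}{u^0}+\frac{3}{4\rho u^0}C^j_{jk}E^kE^i-\frac{3}{4\rho(u^0)^2}C^j_{jk}E^kg^{il}F_{ml}u^m$; $\dot\Theta^{00}=H\Theta^{00}-C^i_{ij}\Theta^{0j}+\tfrac13\rho H+\rho u^0$; $\dot\Theta^{0i}=H\Theta^{0i}+2K^i_j\Theta^{0j}-\tfrac{\rho}{3}(C^k_{kj}g^{ij}+\gamma^i_{jk}g^{jk})+\rho u^i$; $\dot\rho=-\big(\frac{3}{4u^0}+K_{ij}\frac{u^iu^j}{(u^0)^2}-H+C^i_{ij}\frac{u^j}{u^0}\big)\rho-\tfrac34 g_{il}C^j_{jk}E^kE^l\frac{u^i}{(u^0)^3}$; $\dot e=-\big(K_{ij}\frac{u^iu^j}{(u^0)^2}+C^i_{ik}\frac{u^k}{u^0}-H\big)e+\tfrac34 g_{ij}\frac{u^iE^j}{(u^0)^2}\frac{e^2}{\rho}$. Constraints: (C1) $R-K_{ij}K^{ij}+H^2=16\pi(\tau_{00}+T_{00})+2\Lambda$; (C2) $\nabla^iK_{ij}=-8\pi(\tau_{0j}+T_{0j})$; (C3) $C^l_{ij}F_{kl}+C^l_{jk}F_{il}+C^l_{ki}F_{jl}=0$; (C4) $C^i_{ik}E^k+eu^0=0$. For Bianchi types I–VIII the scalar curvature satisfies $R\le0$. *)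

(* Defs.v *)
From Stdlib Require Import Reals Lra Lia.
Open Scope R_scope.

(* Indices run over 0,1,2 (standing for 1,2,3 in the paper). *)
Definition sum3 (f : nat -> R) : R := f 0%nat + f 1%nat + f 2%nat.
Definition Mat := nat -> nat -> R.
Definition Vec := nat -> R.

(* Structure constants: SC k i j = C^k_{ij}, with [e_i,e_j] = C^k_{ij} e_k. *)
Definition SC := nat -> nat -> nat -> R.

Definition det3 (g : Mat) : R :=
  g 0%nat 0%nat * (g 1%nat 1%nat * g 2%nat 2%nat - g 1%nat 2%nat * g 2%nat 1%nat)
  - g 0%nat 1%nat * (g 1%nat 0%nat * g 2%nat 2%nat - g 1%nat 2%nat * g 2%nat 0%nat)
  + g 0%nat 2%nat * (g 1%nat 0%nat * g 2%nat 1%nat - g 1%nat 1%nat * g 2%nat 0%nat).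

(* inverse matrix via the adjugate (cyclic cofactor formula) *)
Definition inv3 (g : Mat) : Mat := fun i j =>
  let a := ((j + 1) mod 3)%nat in let b := ((j + 2) mod 3)%nat in
  let c := ((i + 1) mod 3)%nat in let d := ((i + 2) mod 3)%nat in
  (g a c * g b d - g a d * g b c) / det3 g.

Definition nonzero3 (x : Vec) : Prop := exists i, (i < 3)%nat /\ x i <> 0.
Definition quad3 (m : Mat) (x : Vec) : R :=
  sum3 (fun i => sum3 (fun j => m i j * x i * x j)).
Definition symmetric3 (m : Mat) : Prop :=
  forall i j, (i < 3)%nat -> (j < 3)%nat -> m i j = m j i.
Definition antisymmetric3 (m : Mat) : Prop :=
  forall i j, (i < 3)%nat -> (j < 3)%nat -> m i j = - m j i.
Definition posdef3 (m : Mat) : Prop :=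
  symmetric3 m /\ forall x, nonzero3 x -> quad3 m x > 0.
Definition definite3 (m : Mat) : Prop :=
  (forall x, nonzero3 x -> quad3 m x > 0) \/ (forall x, nonzero3 x -> quad3 m x < 0).

Definition levi (i j k : nat) : R :=
  match i, j, k with
  | O, S O, S (S O) => 1 | S O, S (S O), O => 1 | S (S O), O, S O => 1
  | O, S (S O), S O => -1 | S (S O), S O, O => -1 | S O, O, S (S O) => -1
  | _, _, _ => 0 end.

Definition lie_structure (C : SC) : Prop :=
  (forall k i j, (k < 3)%nat -> (i < 3)%nat -> (j < 3)%nat -> C k i j = - C k j i) /\
  (forall i j k m, (i < 3)%nat -> (j < 3)%nat -> (k < 3)%nat -> (m < 3)%nat ->
     sum3 (fun l => C l i j * C m l k + C l j k * C m l i + C l k i * C m l j) = 0).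

(* Ellis-MacCallum decomposition C^k_{ij} = eps_{ijl} n^{lk} + delta^k_j a_i - delta^k_i a_j:
   a_i = 1/2 C^j_{ij};  in class A (a = 0), n^{lk} = 1/2 eps_{ijl} C^k_{ij}. *)
Definition bianchi_a (C : SC) (i : nat) : R := / 2 * sum3 (fun j => C j i j).
Definition bianchi_n (C : SC) : Mat := fun l k =>
  / 2 * sum3 (fun i => sum3 (fun j => levi i j l * C k i j)).

Definition bianchi_IX (C : SC) : Prop :=
  (forall i, (i < 3)%nat -> bianchi_a C i = 0) /\ definite3 (bianchi_n C).

Definition bianchi_I_VIII (C : SC) : Prop := lie_structure C /\ ~ bianchi_IX C.

Record State := mkState {
  sg : Mat; sK : Mat; sF : Mat; sE : Vec; su : Vec;
  sTh00 : R; sTh0 : Vec; srho : R; se : R }.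

Section Derived.
Variables (C : SC) (Lam : R) (s : State).

Definition gi : Mat := inv3 (sg s).
Definition u0 : R := sqrt (1 + quad3 (sg s) (su s)).
Definition ulow (i : nat) : R := sum3 (fun j => sg s i j * su s j).
Definition Htr : R := sum3 (fun i => sum3 (fun j => gi i j * sK s i j)).
Definition Kmix (i j : nat) : R := sum3 (fun k => gi i k * sK s k j).
Definition Kup (i j : nat) : R :=
  sum3 (fun k => sum3 (fun l => gi i k * gi j l * sK s k l)).
Definition KK : R := sum3 (fun i => sum3 (fun j => sK s i j * Kup i j)).
Definition gam (l i j : nat) : R :=
  / 2 * sum3 (fun k => gi l k *
     (- sum3 (fun m => C m j k * sg s i m)
      + sum3 (fun m => C m k i * sg s j m)
      + sum3 (fun m => C m i j * sg s k m))).
Definition Ric (i j : nat) : R :=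
  sum3 (fun l => sum3 (fun m =>
     gam l l m * gam m j i - gam m j l * gam l m i - C l m j * gam m l i)).
Definition Rscal : R := sum3 (fun i => sum3 (fun j => gi i j * Ric i j)).

Definition tau00 : R :=
  / 2 * quad3 (sg s) (sE s)
  + / 4 * sum3 (fun i => sum3 (fun j => sum3 (fun k => sum3 (fun l =>
        gi i k * gi j l * sF s k l * sF s i j)))).
Definition tau0 (j : nat) : R := - sum3 (fun k => sE s k * sF s j k).
Definition tauij (i j : nat) : R :=
  sum3 (fun k => sum3 (fun l =>
     (/ 2 * sg s i j * sg s k l - sg s i k * sg s j l) * sE s k * sE s l))
  - / 4 * sg s i j * sum3 (fun k => sum3 (fun m => sum3 (fun n => sum3 (fun l =>
        gi k m * gi n l * sF s k l * sF s m n))))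
  + sum3 (fun k => sum3 (fun l => gi k l * sF s i k * sF s j l)).

Definition Thlow00 : R := sTh00 s.
Definition Thlow0 (j : nat) : R := - sum3 (fun k => sg s j k * sTh0 s k).
Definition T00 : R := 4 / 3 * srho s * u0 ^ 2 + Thlow00.
Definition T0 (j : nat) : R := - (4 / 3) * srho s * u0 * ulow j + Thlow0 j.
Definition Tij (i j : nat) : R :=
  4 / 3 * srho s * ulow i * ulow j + / 3 * srho s * sg s i j.

(* nabla_k K_ij for left-invariant K, and nabla^i K_ij *)
Definition nablaK (k i j : nat) : R :=
  - sum3 (fun l => gam l k i * sK s l j) - sum3 (fun l => gam l k j * sK s i l).
Definition divK (j : nat) : R :=
  sum3 (fun i => sum3 (fun k => gi i k * nablaK k i j)).

Definition trC (k : nat) : R := sum3 (fun j => C j j k).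
Definition trCE : R := sum3 (fun k => trC k * sE s k).

Definition rhs_g (i j : nat) : R := - 2 * sK s i j.
Definition rhs_K (i j : nat) : R :=
  Ric i j + Htr * sK s i j - 2 * sum3 (fun l => Kmix l j * sK s i l)
  - 8 * PI * (tauij i j + Tij i j)
  + 4 * PI * (- T00 + sum3 (fun l => sum3 (fun m => gi l m * Tij l m))) * sg s i j
  - Lam * sg s i j.
Definition rhs_F (i j : nat) : R :=
  sum3 (fun k => sum3 (fun l => C k i j * sg s k l * sE s l)).
Definition rhs_E (i : nat) : R :=
  Htr * sE s i - trCE * su s i / u0
  - sum3 (fun k => sum3 (fun l => sum3 (fun m => trC k * gi k l * gi i m * sF s l m)))
  - / 2 * sum3 (fun j => sum3 (fun k => sum3 (fun l => sum3 (fun m =>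
        C i j k * gi j l * gi k m * sF s l m)))).
Definition rhs_u (i : nat) : R :=
  2 * sum3 (fun j => Kmix i j * su s j)
  - sum3 (fun j => sum3 (fun k => gam i j k * su s j * su s k)) / u0
  + 3 / (4 * srho s * u0) * trCE * sE s i
  - 3 / (4 * srho s * u0 ^ 2) * trCE
      * sum3 (fun l => sum3 (fun m => gi i l * sF s m l * su s m)).
Definition rhs_Th00 : R :=
  Htr * sTh00 s - sum3 (fun i => sum3 (fun j => C i i j * sTh0 s j))
  + / 3 * srho s * Htr + srho s * u0.
Definition rhs_Th0 (i : nat) : R :=
  Htr * sTh0 s i + 2 * sum3 (fun j => Kmix i j * sTh0 s j)
  - srho s / 3 * (sum3 (fun j => sum3 (fun k => C k k j * gi i j))
                  + sum3 (fun j => sum3 (fun k => gam i j k * gi j k)))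
  + srho s * su s i.
Definition KuuN : R :=
  sum3 (fun i => sum3 (fun j => sK s i j * su s i * su s j)) / u0 ^ 2.
Definition Cu : R := sum3 (fun i => sum3 (fun j => C i i j * su s j)) / u0.
Definition rhs_rho : R :=
  - (3 / (4 * u0) + KuuN - Htr + Cu) * srho s
  - 3 / 4 * sum3 (fun i => sum3 (fun l => sg s i l * trCE * sE s l * su s i)) / u0 ^ 3.
Definition rhs_e : R :=
  - (KuuN + Cu - Htr) * se s
  + 3 / 4 * sum3 (fun i => sum3 (fun j => sg s i j * su s i * sE s j)) / u0 ^ 2
      * (se s ^ 2 / srho s).

Definition constraint_C1 : Prop := Rscal - KK + Htr ^ 2 = 16 * PI * (tau00 + T00) + 2 * Lam.
Definition constraint_C2 : Prop := forall j, (j < 3)%nat -> divK j = - 8 * PI * (tau0 j + T0 j).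
Definition constraint_C3 : Prop := forall i j k, (i < 3)%nat -> (j < 3)%nat -> (k < 3)%nat ->
  sum3 (fun l => C l i j * sF s k l + C l j k * sF s i l + C l k i * sF s j l) = 0.
Definition constraint_C4 : Prop := sum3 (fun i => sum3 (fun k => C i i k * sE s k)) + se s * u0 = 0.

End Derived.

Definition in_dom (T : option R) (t : R) : Prop :=
  0 <= t /\ match T with Some T' => t < T' | None => True end.

Definition deriv_on (T : option R) (f f' : R -> R) : Prop :=
  forall t, in_dom T t -> forall eps, eps > 0 -> exists delta, delta > 0 /\
    forall h, h <> 0 -> Rabs h < delta -> in_dom T (t + h) ->
      Rabs ((f (t + h) - f t) / h - f' t) < eps.

Definition cont_on (T : option R) (f : R -> R) : Prop :=
  forall t, in_dom T t -> forall eps, eps > 0 -> exists delta, delta > 0 /\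
    forall t', in_dom T t' -> Rabs (t' - t) < delta -> Rabs (f t' - f t) < eps.

Definition C1_with (T : option R) (f f' : R -> R) : Prop :=
  deriv_on T f f' /\ cont_on T f'.

Definition solves_S (C : SC) (Lam : R) (T : option R) (x : R -> State) : Prop :=
  (forall i j, (i < 3)%nat -> (j < 3)%nat ->
     C1_with T (fun t => sg (x t) i j) (fun t => rhs_g (x t) i j) /\
     C1_with T (fun t => sK (x t) i j) (fun t => rhs_K C Lam (x t) i j) /\
     C1_with T (fun t => sF (x t) i j) (fun t => rhs_F C (x t) i j)) /\
  (forall i, (i < 3)%nat ->
     C1_with T (fun t => sE (x t) i) (fun t => rhs_E C (x t) i) /\
     C1_with T (fun t => su (x t) i) (fun t => rhs_u C (x t) i) /\
     C1_with T (fun t => sTh0 (x t) i) (fun t => rhs_Th0 C (x t) i)) /\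
  C1_with T (fun t => sTh00 (x t)) (fun t => rhs_Th00 C (x t)) /\
  C1_with T (fun t => srho (x t)) (fun t => rhs_rho C (x t)) /\
  C1_with T (fun t => se (x t)) (fun t => rhs_e C (x t)).

(* Main.v *)
Require Import Defs.
From Stdlib Require Import Reals Lra Lia Classical Ranalysis5.
Open Scope R_scope.

Ltac ex := unfold sum3; cbn [Nat.add Nat.modulo Nat.divmod Nat.sub fst snd levi].
Ltac symrw H :=
  rewrite ?(H 1%nat 0%nat), ?(H 2%nat 0%nat), ?(H 2%nat 1%nat) by lia.
Ltac symrw_in H H' :=
  rewrite ?(H 1%nat 0%nat), ?(H 2%nat 0%nat), ?(H 2%nat 1%nat) in H' by lia.
Ltac d3 i := destruct i as [|[|[|i]]]; [| | |lia].
Definition nsym (C : SC) (i j : nat) := (bianchi_n C i j + bianchi_n C j i)/2.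
Definition gnm (C:SC) (g : Mat) (i j : nat) := sum3 (fun k => g i k * nsym C k j).
Definition Xq (C:SC) (g : Mat) := sum3 (fun i => sum3 (fun j => gnm C g i j * gnm C g j i)) - /2 * (sum3 (fun i => gnm C g i i))^2.
Definition gram (E : Mat) : Mat := fun i j => sum3 (fun a => E a i * E a j).
Definition v3 (a b c : R) : Vec := fun i => match i with O => a | S O => b | _ => c end.
Lemma asym0 (a : R) : a = - a -> a = 0. Proof. lra. Qed.
Ltac Cz HC k i := rewrite ?(asym0 _ (HC k i i ltac:(lia) ltac:(lia) ltac:(lia))).
Ltac Cw HC k := rewrite ?(HC k 1%nat 0%nat), ?(HC k 2%nat 0%nat), ?(HC k 2%nat 1%nat) by lia.
Ltac Crw HC :=
  Cz HC 0%nat 0%nat; Cz HC 0%nat 1%nat; Cz HC 0%nat 2%nat;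
  Cz HC 1%nat 0%nat; Cz HC 1%nat 1%nat; Cz HC 1%nat 2%nat;
  Cz HC 2%nat 0%nat; Cz HC 2%nat 1%nat; Cz HC 2%nat 2%nat;
  Cw HC 0%nat; Cw HC 1%nat; Cw HC 2%nat.

Lemma Rscal_id C s :
  (forall k i j, (k<3)%nat -> (i<3)%nat -> (j<3)%nat -> C k i j = - C k j i) ->
  symmetric3 (sg s) -> det3 (sg s) <> 0 ->
  Rscal C s = - / det3 (sg s) * Xq C (sg s)
   - 6 * sum3 (fun i => sum3 (fun j => inv3 (sg s) i j * bianchi_a C i * bianchi_a C j)).
Proof.
  intros HC Hs Hd.
  unfold Rscal, Ric, gam, gi, Xq, gnm, nsym, bianchi_n, bianchi_a, inv3.
  unfold det3 in *. ex. Crw HC. symrw Hs. symrw_in Hs Hd.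
  field. exact Hd.
Qed.

Lemma quad_v3 g a b c : symmetric3 g -> quad3 g (v3 a b c) =
  g 0%nat 0%nat*a*a + g 1%nat 1%nat*b*b + g 2%nat 2%nat*c*c + 2*(g 0%nat 1%nat*a*b + g 0%nat 2%nat*a*c + g 1%nat 2%nat*b*c).
Proof. intro Hs. unfold quad3, v3. ex. symrw Hs. ring. Qed.

Lemma quad_nonneg g : posdef3 g -> forall v, 0 <= quad3 g v.
Proof.
  intros [Hs Hq] v.
  destruct (Req_dec (v 0%nat) 0) as [h0|h0];
  [destruct (Req_dec (v 1%nat) 0) as [h1|h1];
   [destruct (Req_dec (v 2%nat) 0) as [h2|h2]|]|].
  - unfold quad3; ex. rewrite h0,h1,h2. lra.
  - apply Rlt_le, Hq. exists 2%nat. split; [lia|auto].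
  - apply Rlt_le, Hq. exists 1%nat. split; [lia|auto].
  - apply Rlt_le, Hq. exists 0%nat. split; [lia|auto].
Qed.

Lemma chol g : posdef3 g -> exists E, (forall i j, (i<3)%nat -> (j<3)%nat -> g i j = gram E i j) /\ 0 < det3 E.
Proof.
  intros [Hs Hq].
  assert (Ha : 0 < g 0%nat 0%nat).
  { specialize (Hq (v3 1 0 0)). rewrite quad_v3 in Hq by exact Hs.
    assert (0 < g 0%nat 0%nat*1*1 + g 1%nat 1%nat*0*0 + g 2%nat 2%nat*0*0 + 2*(g 0%nat 1%nat*1*0 + g 0%nat 2%nat*1*0 + g 1%nat 2%nat*0*0)) by (apply Hq; exists 0%nat; split; [lia|simpl; lra]). lra. }
  set (a := g 0%nat 0%nat) in *. set (b := g 0%nat 1%nat) in *. set (c := g 0%nat 2%nat) in *.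
  set (d := g 1%nat 1%nat) in *. set (e := g 1%nat 2%nat) in *. set (f := g 2%nat 2%nat) in *.
  set (r1 := d - b*b/a).
  assert (Hr1 : 0 < r1).
  { specialize (Hq (v3 (-b/a) 1 0)). rewrite quad_v3 in Hq by exact Hs.
    fold a b c d e f in Hq.
    assert (Hx : 0 < a * (- b / a) * (- b / a) + d * 1 * 1 + f * 0 * 0 + 2 * (b * (- b / a) * 1 + c * (- b / a) * 0 + e * 1 * 0)) by (apply Hq; exists 1%nat; split; [lia|simpl; lra]).
    replace r1 with (a * (- b / a) * (- b / a) + d * 1 * 1 + f * 0 * 0 + 2 * (b * (- b / a) * 1 + c * (- b / a) * 0 + e * 1 * 0)); [exact Hx|].
    unfold r1. field. lra. }
  set (e12 := (e - b*c/a)).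
  set (r2 := f - c*c/a - e12*e12/r1).
  assert (Hr2 : 0 < r2).
  { set (be := - e12 / r1). set (al := - (b*be + c)/a).
    specialize (Hq (v3 al be 1)). rewrite quad_v3 in Hq by exact Hs.
    fold a b c d e f in Hq.
    assert (Hx : 0 < a * al * al + d * be * be + f * 1 * 1 + 2 * (b * al * be + c * al * 1 + e * be * 1)) by (apply Hq; exists 2%nat; split; [lia|simpl; lra]).
    replace r2 with (a * al * al + d * be * be + f * 1 * 1 + 2 * (b * al * be + c * al * 1 + e * be * 1)); [exact Hx|].
    assert (Hda : d*a - b*b = r1*a) by (unfold r1; field; lra). assert (0 < r1*a) by (apply Rmult_lt_0_compat; lra). unfold r2, al, be, e12, r1. field. split; lra. }
  set (sa := sqrt a). set (s1 := sqrt r1). set (s2 := sqrt r2).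
  assert (Hsa : sa * sa = a) by (apply sqrt_sqrt; lra).
  assert (Hs1 : s1 * s1 = r1) by (apply sqrt_sqrt; lra).
  assert (Hs2 : s2 * s2 = r2) by (apply sqrt_sqrt; lra).
  assert (Psa : 0 < sa) by (apply sqrt_lt_R0; lra).
  assert (Ps1 : 0 < s1) by (apply sqrt_lt_R0; lra).
  assert (Ps2 : 0 < s2) by (apply sqrt_lt_R0; lra).
  assert (Ed : d = s1*s1 + b*b/a) by (rewrite Hs1; unfold r1; ring).
  assert (Ef : f = s2*s2 + c*c/a + e12*e12/r1) by (rewrite Hs2; unfold r2; ring).
  exists (fun i j => match i, j with
    | O, O => sa | O, S O => b/sa | O, S (S O) => c/sa
    | S O, S O => s1 | S O, S (S O) => e12/s1
    | S (S O), S (S O) => s2 | _, _ => 0 end).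
  split.
  - intros i j Hi Hj. unfold gram. ex.
    destruct i as [|[|[|i]]]; try lia; destruct j as [|[|[|j]]]; try lia; cbn.
    + fold a. rewrite <- Hsa. ring.
    + fold b. field. lra.
    + fold c. field. lra.
    + rewrite (Hs 1%nat 0%nat) by lia. fold b. field. lra.
    + fold d. rewrite Ed. rewrite <- Hsa. field. lra.
    + fold e. unfold e12. rewrite <- Hsa. field. lra.
    + rewrite (Hs 2%nat 0%nat) by lia. fold c. field. lra.
    + rewrite (Hs 2%nat 1%nat) by lia. fold e. unfold e12. rewrite <- Hsa. field. lra.
    + fold f. rewrite Ef. rewrite <- Hs1. rewrite <- Hsa. field. lra.
  - unfold det3. cbn. ring_simplify. apply Rmult_lt_0_compat; [|lra]. apply Rmult_lt_0_compat; lra.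
Qed.
Lemma det_gram E : det3 (gram E) = det3 E * det3 E.
Proof. unfold det3, gram. ex. ring. Qed.

Lemma gi_gram E : det3 E <> 0 -> forall i j, (i<3)%nat -> (j<3)%nat ->
  inv3 (gram E) i j = sum3 (fun a => inv3 E i a * inv3 E j a).
Proof.
  intros HE i j Hi Hj. unfold inv3 at 1. rewrite det_gram.
  unfold inv3, gram; unfold det3 in *; d3 i; d3 j; ex; field; auto.
Qed.

Lemma invE_l E : det3 E <> 0 -> forall i k, (i<3)%nat -> (k<3)%nat ->
  sum3 (fun a => inv3 E i a * E a k) = if Nat.eqb i k then 1 else 0.
Proof.
  intros HE i k Hi Hk. unfold inv3; unfold det3 in *; d3 i; d3 k; ex; cbn; field; auto.
Qed.

Lemma inv3_ext g h : (forall i j, (i<3)%nat -> (j<3)%nat -> g i j = h i j) ->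
  forall i j, (i<3)%nat -> (j<3)%nat -> inv3 g i j = inv3 h i j.
Proof.
  intros H i j Hi Hj. unfold inv3, det3. d3 i; d3 j; cbn [Nat.add Nat.modulo Nat.divmod Nat.sub fst snd];
  rewrite !H by lia; reflexivity.
Qed.

Lemma getQ g : posdef3 g -> exists E,
  (forall i j, (i<3)%nat -> (j<3)%nat -> g i j = gram E i j) /\ 0 < det3 E /\
  (forall i j, (i<3)%nat -> (j<3)%nat -> inv3 g i j = sum3 (fun a => inv3 E i a * inv3 E j a)).
Proof.
  intros Hp. destruct (chol g Hp) as [E [HE Hd]]. exists E. split; [exact HE|split; [exact Hd|]].
  intros i j Hi Hj. rewrite (inv3_ext g (gram E) HE i j Hi Hj). apply gi_gram; auto; lra.
Qed.

Lemma det_pos g : posdef3 g -> 0 < det3 g.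
Proof.
  intros Hp. destruct (chol g Hp) as [E [HE Hd]].
  replace (det3 g) with (det3 (gram E)).
  - rewrite det_gram. apply Rmult_lt_0_compat; lra.
  - unfold det3. rewrite !HE by lia. reflexivity.
Qed.

Definition Mq (Q K : Mat) (a b : nat) := sum3 (fun i => sum3 (fun j => Q i a * K i j * Q j b)).

Lemma sum_sq_nonneg (f : nat -> nat -> R) : 0 <= sum3 (fun a => sum3 (fun b => f a b ^ 2)).
Proof. unfold sum3. repeat apply Rplus_le_le_0_compat; apply pow2_ge_0. Qed.

Lemma KK_ge s : symmetric3 (sK s) -> posdef3 (sg s) -> KK s >= / 3 * Htr s ^ 2.
Proof.
  intros HK Hp. destruct (getQ _ Hp) as [E [_ [_ HQ]]]. set (Q := inv3 E) in *.
  assert (E1 : KK s = sum3 (fun a => sum3 (fun b => Mq Q (sK s) a b ^ 2))).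
  { unfold KK, Kup, gi. ex. rewrite !HQ by lia. unfold Mq. ex. ring. }
  assert (E2 : Htr s = sum3 (fun a => Mq Q (sK s) a a)).
  { unfold Htr, gi. ex. rewrite !HQ by lia. unfold Mq. ex. ring. }
  assert (S1 : Mq Q (sK s) 1 0 = Mq Q (sK s) 0 1) by (unfold Mq; ex; symrw HK; ring).
  assert (S2 : Mq Q (sK s) 2 0 = Mq Q (sK s) 0 2) by (unfold Mq; ex; symrw HK; ring).
  assert (S3 : Mq Q (sK s) 2 1 = Mq Q (sK s) 1 2) by (unfold Mq; ex; symrw HK; ring).
  rewrite E1, E2. unfold sum3. rewrite S1, S2, S3.
  set (m00 := Mq Q (sK s) 0 0). set (m11 := Mq Q (sK s) 1 1). set (m22 := Mq Q (sK s) 2 2).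
  set (m01 := Mq Q (sK s) 0 1). set (m02 := Mq Q (sK s) 0 2). set (m12 := Mq Q (sK s) 1 2).
  assert (0 <= (m00 - m11)^2) by apply pow2_ge_0.
  assert (0 <= (m11 - m22)^2) by apply pow2_ge_0.
  assert (0 <= (m00 - m22)^2) by apply pow2_ge_0.
  assert (0 <= m01^2) by apply pow2_ge_0.
  assert (0 <= m02^2) by apply pow2_ge_0.
  assert (0 <= m12^2) by apply pow2_ge_0.
  nra.
Qed.

Lemma tau00_nonneg s : posdef3 (sg s) -> 0 <= tau00 s.
Proof.
  intros Hp. destruct (getQ _ Hp) as [E [_ [_ HQ]]]. set (Q := inv3 E) in *.
  assert (E1 : sum3 (fun i => sum3 (fun j => sum3 (fun k => sum3 (fun l =>
        gi s i k * gi s j l * sF s k l * sF s i j)))) =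
        sum3 (fun a => sum3 (fun b => Mq Q (sF s) a b ^ 2))).
  { unfold gi. ex. rewrite !HQ by lia. unfold Mq. ex. ring. }
  unfold tau00. rewrite E1.
  pose proof (quad_nonneg _ Hp (sE s)). pose proof (sum_sq_nonneg (Mq Q (sF s))). lra.
Qed.

Lemma giaa_nonneg g (v : Vec) : posdef3 g ->
  0 <= sum3 (fun i => sum3 (fun j => inv3 g i j * v i * v j)).
Proof.
  intros Hp. destruct (getQ _ Hp) as [E [_ [_ HQ]]]. set (Q := inv3 E) in *.
  replace (sum3 (fun i => sum3 (fun j => inv3 g i j * v i * v j))) with
    (sum3 (fun a => sum3 (fun b => (if Nat.eqb a b then sum3 (fun i => Q i a * v i) else 0) ^ 2))).
  - apply sum_sq_nonneg.
  - ex. rewrite !HQ by lia. ex. cbn. ring.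
Qed.

Lemma qid (m00 m01 m02 m11 m12 m22 w0 w1 w2 a0 a1 a2 : R) :
  let p0 := w1*a2 - w2*a1 in let p1 := w2*a0 - w0*a2 in let p2 := w0*a1 - w1*a0 in
  let q0 := w1*p2 - w2*p1 in let q1 := w2*p0 - w0*p2 in let q2 := w0*p1 - w1*p0 in
  let d0 := w0*w0+w1*w1+w2*w2 in let d1 := p0*p0+p1*p1+p2*p2 in let d2 := q0*q0+q1*q1+q2*q2 in
  let B (x0 x1 x2 y0 y1 y2 : R) := x0*(m00*y0+m01*y1+m02*y2) + x1*(m01*y0+m11*y1+m12*y2) + x2*(m02*y0+m12*y1+m22*y2) in
  d0 <> 0 -> d1 <> 0 -> d2 <> 0 ->
  m00*m00+m11*m11+m22*m22+2*(m01*m01+m02*m02+m12*m12) - /2*(m00+m11+m22)^2 =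
  (B w0 w1 w2 w0 w1 w2/d0)^2 + (B p0 p1 p2 p0 p1 p2/d1)^2 + (B q0 q1 q2 q0 q1 q2/d2)^2
  + 2*((B w0 w1 w2 p0 p1 p2)^2/(d0*d1) + (B w0 w1 w2 q0 q1 q2)^2/(d0*d2) + (B p0 p1 p2 q0 q1 q2)^2/(d1*d2))
  - /2 * (B w0 w1 w2 w0 w1 w2/d0 + B p0 p1 p2 p0 p1 p2/d1 + B q0 q1 q2 q0 q1 q2/d2)^2.
Proof. cbv zeta beta. intros. field. auto. Qed.

Lemma qineq (m00 m01 m02 m11 m12 m22 w0 w1 w2 a0 a1 a2 : R) :
  let p0 := w1*a2 - w2*a1 in let p1 := w2*a0 - w0*a2 in let p2 := w0*a1 - w1*a0 in
  let d0 := w0*w0+w1*w1+w2*w2 in let d1 := p0*p0+p1*p1+p2*p2 in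
  0 < d0 -> 0 < d1 ->
  w0*(m00*w0+m01*w1+m02*w2) + w1*(m01*w0+m11*w1+m12*w2) + w2*(m02*w0+m12*w1+m22*w2) = 0 ->
  0 <= m00*m00+m11*m11+m22*m22+2*(m01*m01+m02*m02+m12*m12) - /2*(m00+m11+m22)^2.
Proof.
  intros p0 p1 p2 d0 d1 H0 H1 Hw.
  set (q0 := w1*p2 - w2*p1). set (q1 := w2*p0 - w0*p2). set (q2 := w0*p1 - w1*p0).
  set (d2 := q0*q0+q1*q1+q2*q2).
  assert (Hd2 : d2 = d0 * d1) by (unfold d2, q0, q1, q2, d0, d1, p0, p1, p2; ring).
  assert (P2 : 0 < d2) by (rewrite Hd2; apply Rmult_lt_0_compat; auto).
  rewrite (qid m00 m01 m02 m11 m12 m22 w0 w1 w2 a0 a1 a2) by (cbv zeta; fold p0 p1 p2 q0 q1 q2; fold d0 d1 d2; lra).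
  cbv zeta. fold p0 p1 p2. fold q0 q1 q2. fold d0 d1 d2. rewrite Hw.
  set (u := (p0 * (m00 * p0 + m01 * p1 + m02 * p2) + p1 * (m01 * p0 + m11 * p1 + m12 * p2) +
     p2 * (m02 * p0 + m12 * p1 + m22 * p2)) / d1).
  set (v := (q0 * (m00 * q0 + m01 * q1 + m02 * q2) + q1 * (m01 * q0 + m11 * q1 + m12 * q2) +
     q2 * (m02 * q0 + m12 * q1 + m22 * q2)) / d2).
  match goal with |- 0 <= _ + _ + _ + 2 * (?A / ?a + ?B / ?b + ?C / ?c) - _ =>
    assert (0 <= A / a) by (apply Rmult_le_pos; [apply pow2_ge_0|apply Rlt_le, Rinv_0_lt_compat, Rmult_lt_0_compat; auto]);
    assert (0 <= B / b) by (apply Rmult_le_pos; [apply pow2_ge_0|apply Rlt_le, Rinv_0_lt_compat, Rmult_lt_0_compat; auto]);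
    assert (0 <= C / c) by (apply Rmult_le_pos; [apply pow2_ge_0|apply Rlt_le, Rinv_0_lt_compat, Rmult_lt_0_compat; auto]) end.
  assert (0 <= (u - v)^2) by apply pow2_ge_0.
  replace (0 / d0) with 0 by (field; lra).
  nra.
Qed.

Definition Qf (m : Mat) := sum3 (fun i => sum3 (fun j => m i j * m i j)) - /2 * (sum3 (fun i => m i i))^2.

Lemma Qf_nonneg m w : symmetric3 m -> nonzero3 w -> quad3 m w = 0 -> 0 <= Qf m.
Proof.
  intros Hs [k [Hk Hw]] Hq. unfold Qf. unfold quad3 in Hq. unfold sum3 in Hq. ex. ex. symrw Hs. symrw_in Hs Hq.
  assert (Hd0 : 0 < w 0%nat * w 0%nat + w 1%nat * w 1%nat + w 2%nat * w 2%nat).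
  { d3 k; [assert (0 < w 0%nat * w 0%nat) by nra|assert (0 < w 1%nat * w 1%nat) by nra|assert (0 < w 2%nat * w 2%nat) by nra];
    assert (0 <= w 0%nat * w 0%nat) by nra; assert (0 <= w 1%nat * w 1%nat) by nra; assert (0 <= w 2%nat * w 2%nat) by nra; lra. }
  assert (HQ : forall a0 a1 a2, 0 < (w 1%nat*a2 - w 2%nat*a1)*(w 1%nat*a2 - w 2%nat*a1) + (w 2%nat*a0 - w 0%nat*a2)*(w 2%nat*a0 - w 0%nat*a2) + (w 0%nat*a1 - w 1%nat*a0)*(w 0%nat*a1 - w 1%nat*a0) -> 
     0 <= m 0%nat 0%nat*m 0%nat 0%nat+m 1%nat 1%nat*m 1%nat 1%nat+m 2%nat 2%nat*m 2%nat 2%nat+2*(m 0%nat 1%nat*m 0%nat 1%nat+m 0%nat 2%nat*m 0%nat 2%nat+m 1%nat 2%nat*m 1%nat 2%nat) - /2*(m 0%nat 0%nat+m 1%nat 1%nat+m 2%nat 2%nat)^2).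
  { intros a0 a1 a2 Hp. apply (qineq _ _ _ _ _ _ (w 0%nat) (w 1%nat) (w 2%nat) a0 a1 a2); cbv zeta; [lra|lra|lra]. }
  d3 k.
  - assert (0 < w 0%nat * w 0%nat) by nra. specialize (HQ 0 1 0 ltac:(nra)). lra.
  - assert (0 < w 1%nat * w 1%nat) by nra. specialize (HQ 0 0 1 ltac:(nra)). lra.
  - assert (0 < w 2%nat * w 2%nat) by nra. specialize (HQ 1 0 0 ltac:(nra)). lra.
Qed.

Definition mE (E : Mat) (n : Mat) (a b : nat) := sum3 (fun k => sum3 (fun l => E a k * n k l * E b l)).

Lemma nsym_sym C i j : nsym C i j = nsym C j i.
Proof. unfold nsym. field. Qed.

Ltac nsrw C := rewrite ?(nsym_sym C 1%nat 0%nat), ?(nsym_sym C 2%nat 0%nat), ?(nsym_sym C 2%nat 1%nat).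

Lemma Xq_Qf C g E : (forall i j, (i<3)%nat -> (j<3)%nat -> g i j = gram E i j) ->
  Xq C g = Qf (mE E (nsym C)).
Proof.
  intros HE. unfold Xq, gnm, Qf, mE. ex. rewrite !HE by lia. unfold gram. ex. nsrw C. ring.
Qed.

Lemma mE_sym C E : symmetric3 (mE E (nsym C)).
Proof. intros i j _ _. unfold mE. ex. nsrw C. ring. Qed.

Lemma nz_dec (v : Vec) : nonzero3 v \/ (v 0%nat = 0 /\ v 1%nat = 0 /\ v 2%nat = 0).
Proof.
  destruct (Req_dec (v 0%nat) 0) as [h0|h0];
  [destruct (Req_dec (v 1%nat) 0) as [h1|h1];
   [destruct (Req_dec (v 2%nat) 0) as [h2|h2]|]|].
  - right; auto.
  - left; exists 2%nat; split; [lia|auto].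
  - left; exists 1%nat; split; [lia|auto].
  - left; exists 0%nat; split; [lia|auto].
Qed.

Lemma quad3_ext n f h : (forall k, (k<3)%nat -> f k = h k) -> quad3 n f = quad3 n h.
Proof. intros H. unfold quad3, sum3. rewrite !H by lia. reflexivity. Qed.

Lemma Xq_nonneg C g v : posdef3 g -> nonzero3 v -> quad3 (nsym C) v = 0 -> 0 <= Xq C g.
Proof.
  intros Hp Hv Hq. destruct (chol g Hp) as [E [HE Hd]].
  rewrite (Xq_Qf C g E HE).
  set (w := fun a => sum3 (fun i => inv3 E i a * v i)).
  assert (Hw : forall k, (k<3)%nat -> sum3 (fun a => E a k * w a) = v k).
  { intros k Hk. pose proof (invE_l E ltac:(lra)) as HI.
    assert (Hx : sum3 (fun a => E a k * w a) = sum3 (fun i => v i * sum3 (fun a => inv3 E i a * E a k))).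
    { unfold w. ex. ring. }
    rewrite Hx. unfold sum3 at 1. rewrite !HI by lia. d3 k; cbn; ring. }
  apply (Qf_nonneg _ w (mE_sym C E)).
  - destruct (nz_dec w) as [Hn|[h0 [h1 h2]]]; [exact Hn|].
    exfalso. destruct Hv as [k [Hk Hvk]]. apply Hvk. rewrite <- (Hw k Hk). ex. rewrite h0, h1, h2. ring.
  - assert (Hx : quad3 (mE E (nsym C)) w = quad3 (nsym C) (fun k => sum3 (fun a => E a k * w a))).
    { unfold quad3, mE. ex. ring. }
    rewrite Hx. rewrite <- Hq. apply quad3_ext. exact Hw.
Qed.

Lemma quad_nsym C x : quad3 (bianchi_n C) x = quad3 (nsym C) x.
Proof. unfold quad3, nsym. ex. field. Qed.

Definition Jac (C : SC) (m : nat) := sum3 (fun l => C l 0%nat 1%nat * C m l 2%nat + C l 1%nat 2%nat * C m l 0%nat + C l 2%nat 0%nat * C m l 1%nat).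

Lemma quad_a C : (forall k i j, (k<3)%nat -> (i<3)%nat -> (j<3)%nat -> C k i j = - C k j i) ->
  quad3 (nsym C) (bianchi_a C) = / 2 * sum3 (fun m => bianchi_a C m * Jac C m).
Proof.
  intros HC. unfold quad3, nsym, bianchi_n, bianchi_a, Jac. ex. Crw HC. field.
Qed.

Lemma null_from_signs (n : Mat) x y : symmetric3 n -> nonzero3 x -> nonzero3 y ->
  quad3 n x <= 0 -> 0 <= quad3 n y -> exists v, nonzero3 v /\ quad3 n v = 0.
Proof.
  intros Hs Hx Hy Hqx Hqy.
  destruct (Req_dec (quad3 n x) 0) as [E|E]; [exists x; auto|].
  destruct (Req_dec (quad3 n y) 0) as [F|F]; [exists y; auto|].
  set (qx := quad3 n x) in *. set (qy := quad3 n y) in *.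
  assert (Px : qx < 0) by lra. assert (Py : 0 < qy) by lra.
  set (B := sum3 (fun i => sum3 (fun j => n i j * x i * y j))).
  set (s := sqrt (B*B - qx*qy)).
  assert (Hs2 : s * s = B*B - qx*qy) by (apply sqrt_sqrt; nra).
  set (lam := (-B + s)/qy).
  set (z := fun i => x i + lam * y i).
  assert (Hz : quad3 n z = qx + 2*lam*B + lam*lam*qy).
  { unfold z, qx, qy, B, quad3. ex. symrw Hs. ring. }
  assert (Hl : qy * lam = s - B) by (unfold lam; field; lra).
  exists z. split.
  - destruct (nz_dec z) as [Hn|[h0 [h1 h2]]]; [exact Hn|]. exfalso.
    assert (Hxy : qx = lam*lam*qy).
    { unfold qx, qy, quad3. unfold z in h0, h1, h2. ex.
      replace (x 0%nat) with (- lam * y 0%nat) by lra.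
      replace (x 1%nat) with (- lam * y 1%nat) by lra.
      replace (x 2%nat) with (- lam * y 2%nat) by lra. ring. }
    nra.
  - rewrite Hz.
    assert (lam * (s + B) * qy = - qx * qy).
    { replace (lam * (s + B) * qy) with ((qy * lam) * (s + B)) by ring. rewrite Hl. nra. }
    assert (lam * (s + B) = - qx).
    { apply (Rmult_eq_reg_r qy); [lra|lra]. }
    nra.
Qed.

Lemma nsym_symmetric C : symmetric3 (nsym C).
Proof. intros i j _ _. apply nsym_sym. Qed.

Lemma null_vec C : lie_structure C -> ~ bianchi_IX C -> exists v, nonzero3 v /\ quad3 (nsym C) v = 0.
Proof.
  intros [HC HJ] HIX.
  destruct (classic (forall i, (i<3)%nat -> bianchi_a C i = 0)) as [Ha|Ha].
  - assert (Hnd : ~ definite3 (bianchi_n C)) by (intro D; apply HIX; split; auto).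
    unfold definite3 in Hnd. apply not_or_and in Hnd. destruct Hnd as [N1 N2].
    apply not_all_ex_not in N1. destruct N1 as [x Hx].
    apply not_all_ex_not in N2. destruct N2 as [y Hy].
    apply imply_to_and in Hx. apply imply_to_and in Hy.
    destruct Hx as [Hx Hqx]. destruct Hy as [Hy Hqy].
    rewrite quad_nsym in Hqx, Hqy.
    apply (null_from_signs _ x y (nsym_symmetric C) Hx Hy); lra.
  - exists (bianchi_a C). split.
    + apply not_all_ex_not in Ha. destruct Ha as [i Hi]. apply imply_to_and in Hi.
      exists i. tauto.
    + rewrite quad_a by exact HC.
      assert (J0 : Jac C 0%nat = 0) by (apply (HJ 0%nat 1%nat 2%nat 0%nat); lia).
      assert (J1 : Jac C 1%nat = 0) by (apply (HJ 0%nat 1%nat 2%nat 1%nat); lia).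
      assert (J2 : Jac C 2%nat = 0) by (apply (HJ 0%nat 1%nat 2%nat 2%nat); lia).
      unfold sum3. rewrite J0, J1, J2. ring.
Qed.

Lemma Rscal_nonpos C s : bianchi_I_VIII C -> posdef3 (sg s) -> Rscal C s <= 0.
Proof.
  intros [HL HIX] Hp.
  destruct (null_vec C HL HIX) as [v [Hv Hq]].
  pose proof (det_pos _ Hp) as Hd.
  rewrite Rscal_id; [| destruct HL; auto | destruct Hp; auto | lra].
  pose proof (Xq_nonneg C (sg s) v Hp Hv Hq).
  pose proof (giaa_nonneg (sg s) (bianchi_a C) Hp).
  assert (0 <= / det3 (sg s) * Xq C (sg s)) by (apply Rmult_le_pos; [apply Rlt_le, Rinv_0_lt_compat; lra|lra]).
  lra.
Qed.

Lemma tr_gg g : symmetric3 g -> det3 g <> 0 -> sum3 (fun i => sum3 (fun j => inv3 g i j * g i j)) = 3.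
Proof. intros Hs Hd. unfold inv3; unfold det3 in *. ex. symrw Hs. symrw_in Hs Hd. field. exact Hd. Qed.

Lemma tr_tau s : symmetric3 (sg s) -> det3 (sg s) <> 0 ->
  sum3 (fun i => sum3 (fun j => gi s i j * tauij s i j)) = tau00 s.
Proof. intros Hs Hd. unfold tauij, tau00, quad3, gi, inv3; unfold det3 in *. ex. symrw Hs. symrw_in Hs Hd. field. exact Hd. Qed.

Lemma tr_T s : symmetric3 (sg s) -> det3 (sg s) <> 0 ->
  sum3 (fun i => sum3 (fun j => gi s i j * Tij s i j)) = 4/3 * srho s * quad3 (sg s) (su s) + srho s.
Proof. intros Hs Hd. unfold Tij, ulow, quad3, gi, inv3; unfold det3 in *. ex. symrw Hs. symrw_in Hs Hd. field. exact Hd. Qed.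

Lemma tr_KK s : symmetric3 (sg s) -> symmetric3 (sK s) -> det3 (sg s) <> 0 ->
  sum3 (fun i => sum3 (fun j => gi s i j * sum3 (fun l => Kmix s l j * sK s i l))) = KK s.
Proof. intros Hs HK Hd. unfold KK, Kup, Kmix, gi, inv3; unfold det3 in *. ex. symrw Hs. symrw HK. symrw_in Hs Hd. field. exact Hd. Qed.

Lemma rhsK_sum C Lam s : sum3 (fun i => sum3 (fun j => gi s i j * rhs_K C Lam s i j)) =
  Rscal C s + Htr s * Htr s - 2 * sum3 (fun i => sum3 (fun j => gi s i j * sum3 (fun l => Kmix s l j * sK s i l)))
  - 8 * PI * (sum3 (fun i => sum3 (fun j => gi s i j * tauij s i j)) + sum3 (fun i => sum3 (fun j => gi s i j * Tij s i j)))
  + (4 * PI * (- T00 s + sum3 (fun i => sum3 (fun j => gi s i j * Tij s i j))) - Lam) * sum3 (fun i => sum3 (fun j => gi s i j * sg s i j)).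
Proof. unfold rhs_K, Rscal, Htr. ex. ring. Qed.

Lemma pw C Lam s : bianchi_I_VIII C -> posdef3 (sg s) -> symmetric3 (sK s) -> 0 < srho s -> 0 <= sTh00 s ->
  constraint_C1 C Lam s ->
  2 * KK s + sum3 (fun i => sum3 (fun j => gi s i j * rhs_K C Lam s i j)) >= KK s - Lam /\
  Htr s ^ 2 > 3 * Lam.
Proof.
  intros HB Hp HK Hr HT HC1.
  pose proof (det_pos _ Hp) as Hd.
  assert (Hs : symmetric3 (sg s)) by (destruct Hp; auto).
  rewrite rhsK_sum. rewrite tr_KK, tr_tau, tr_T by (auto; lra).
  replace (sum3 (fun i => sum3 (fun j => gi s i j * sg s i j))) with 3 by (symmetry; apply tr_gg; auto; lra).
  pose proof (Rscal_nonpos C s HB Hp).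
  pose proof (KK_ge s HK Hp).
  pose proof (tau00_nonneg s Hp).
  pose proof (quad_nonneg _ Hp (su s)) as Hu.
  pose proof PI_RGT_0.
  assert (Hu0 : 0 < u0 s) by (unfold u0; apply sqrt_lt_R0; lra).
  assert (HT00 : 0 < T00 s) by (unfold T00, Thlow00; assert (0 < srho s * u0 s ^ 2) by (apply Rmult_lt_0_compat; [lra|apply pow_lt; lra]); lra).
  unfold constraint_C1 in HC1.
  assert (0 <= PI * tau00 s) by (apply Rmult_le_pos; lra).
  assert (0 < PI * T00 s) by (apply Rmult_lt_0_compat; lra).
  assert (0 <= PI * (4/3 * srho s * quad3 (sg s) (su s) + srho s)) by (apply Rmult_le_pos; [lra| assert (0 <= srho s * quad3 (sg s) (su s)) by (apply Rmult_le_pos; lra); lra]).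
  split; nra.
Qed.

Definition ext (f f' : R -> R) (s : R) : R := if Rlt_dec s 0 then f 0 + s * f' 0 else f s.

Lemma ext_dom T f f' t : in_dom T t -> ext f f' t = f t.
Proof. intros [H _]. unfold ext. destruct (Rlt_dec t 0); [lra|reflexivity]. Qed.

Lemma dom_gap T t : in_dom T t -> exists g, 0 < g /\ forall h, Rabs h < g -> 0 <= t + h -> in_dom T (t + h).
Proof.
  intros [H0 HT]. destruct T as [T'|].
  - exists (T' - t). split; [lra|]. intros h Hh Hp. split; [lra|]. apply Rabs_def2 in Hh. lra.
  - exists 1. split; [lra|]. intros h Hh Hp. split; [lra|exact I].
Qed.

Lemma deriv_ext T f f' : deriv_on T f f' -> forall t, in_dom T t -> derivable_pt_lim (ext f f') t (f' t).
Proof.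
  intros HD t Ht eps Heps.
  destruct (HD t Ht eps Heps) as [d [Hd Hh]].
  destruct (dom_gap T t Ht) as [g [Hg Hgap]].
  destruct Ht as [Ht0 HtT].
  destruct (Rle_lt_or_eq_dec 0 t Ht0) as [Tp|T0].
  - assert (Hm : 0 < Rmin d (Rmin g t)) by (repeat apply Rmin_pos; lra).
    exists (mkposreal _ Hm). intros h Hh0 Hhd. simpl in Hhd.
    assert (Hh1 : Rabs h < d) by (eapply Rlt_le_trans; [exact Hhd|apply Rmin_l]).
    assert (Hh2 : Rabs h < g) by (eapply Rlt_le_trans; [exact Hhd| eapply Rle_trans; [apply Rmin_r|apply Rmin_l]]).
    assert (Hh3 : Rabs h < t) by (eapply Rlt_le_trans; [exact Hhd| eapply Rle_trans; [apply Rmin_r|apply Rmin_r]]).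
    assert (Hpos : 0 <= t + h) by (apply Rabs_def2 in Hh3; lra).
    pose proof (Hgap h Hh2 Hpos) as Hdom.
    rewrite (ext_dom T f f' (t+h) Hdom), (ext_dom T f f' t (conj Ht0 HtT)).
    apply Hh; auto.
  - subst t.
    assert (Hm : 0 < Rmin d g) by (apply Rmin_pos; lra).
    exists (mkposreal _ Hm). intros h Hh0 Hhd. simpl in Hhd.
    assert (Hh1 : Rabs h < d) by (eapply Rlt_le_trans; [exact Hhd|apply Rmin_l]).
    assert (Hh2 : Rabs h < g) by (eapply Rlt_le_trans; [exact Hhd|apply Rmin_r]).
    rewrite (ext_dom T f f' 0 (conj Ht0 HtT)).
    destruct (Rlt_dec (0 + h) 0) as [Hn|Hn].
    + unfold ext at 1. destruct (Rlt_dec (0 + h) 0); [|contradiction].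
      replace ((f 0 + (0 + h) * f' 0 - f 0) / h - f' 0) with 0 by (field; auto).
      rewrite Rabs_R0; lra.
    + assert (Hpos : 0 <= 0 + h) by lra.
      pose proof (Hgap h Hh2 Hpos) as Hdom.
      rewrite (ext_dom T f f' (0+h) Hdom). apply Hh; auto.
Qed.

Lemma deriv_from T f l F : (forall t, in_dom T t -> F t = f t) ->
  (forall t, in_dom T t -> derivable_pt_lim F t (l t)) -> deriv_on T f l.
Proof.
  intros HF HD t Ht eps Heps. destruct (HD t Ht eps Heps) as [d Hd].
  exists d. split; [apply cond_pos|]. intros h Hh0 Hh Hdom.
  rewrite <- (HF _ Hdom), <- (HF _ Ht). apply Hd; auto.
Qed.

Lemma D_plus T f f' g g' : deriv_on T f f' -> deriv_on T g g' ->
  deriv_on T (fun t => f t + g t) (fun t => f' t + g' t).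
Proof.
  intros Hf Hg. apply (deriv_from T _ _ (plus_fct (ext f f') (ext g g'))).
  - intros t Ht. unfold plus_fct. rewrite !(ext_dom T) by auto. reflexivity.
  - intros t Ht. apply derivable_pt_lim_plus; apply (deriv_ext T); auto.
Qed.

Lemma D_minus T f f' g g' : deriv_on T f f' -> deriv_on T g g' ->
  deriv_on T (fun t => f t - g t) (fun t => f' t - g' t).
Proof.
  intros Hf Hg. apply (deriv_from T _ _ (minus_fct (ext f f') (ext g g'))).
  - intros t Ht. unfold minus_fct. rewrite !(ext_dom T) by auto. reflexivity.
  - intros t Ht. apply derivable_pt_lim_minus; apply (deriv_ext T); auto.
Qed.

Lemma D_mult T f f' g g' : deriv_on T f f' -> deriv_on T g g' ->
  deriv_on T (fun t => f t * g t) (fun t => f' t * g t + f t * g' t).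
Proof.
  intros Hf Hg. apply (deriv_from T _ _ (mult_fct (ext f f') (ext g g'))).
  - intros t Ht. unfold mult_fct. rewrite !(ext_dom T) by auto. reflexivity.
  - intros t Ht. pose proof (derivable_pt_lim_mult _ _ t _ _ (deriv_ext T f f' Hf t Ht) (deriv_ext T g g' Hg t Ht)) as H.
    rewrite !(ext_dom T) in H by auto. exact H.
Qed.

Lemma D_div T f f' g g' : deriv_on T f f' -> deriv_on T g g' -> (forall t, in_dom T t -> g t <> 0) ->
  deriv_on T (fun t => f t / g t) (fun t => (f' t * g t - g' t * f t) / (g t)²).
Proof.
  intros Hf Hg Hn. apply (deriv_from T _ _ (div_fct (ext f f') (ext g g'))).
  - intros t Ht. unfold div_fct. rewrite !(ext_dom T) by auto. reflexivity.
  - intros t Ht. assert (ext g g' t <> 0) by (rewrite (ext_dom T) by auto; auto).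
    pose proof (derivable_pt_lim_div _ _ t _ _ (deriv_ext T f f' Hf t Ht) (deriv_ext T g g' Hg t Ht) H) as H'.
    rewrite !(ext_dom T) in H' by auto. exact H'.
Qed.

Lemma D_const T c : deriv_on T (fun _ => c) (fun _ => 0).
Proof.
  intros t Ht eps Heps. exists 1. split; [lra|]. intros h Hh _ _.
  replace ((c - c) / h - 0) with 0 by (field; auto). rewrite Rabs_R0; lra.
Qed.

Lemma D_id T : deriv_on T (fun t => t) (fun _ => 1).
Proof.
  intros t Ht eps Heps. exists 1. split; [lra|]. intros h Hh _ _.
  replace ((t + h - t) / h - 1) with 0 by (field; auto). rewrite Rabs_R0; lra.
Qed.

Lemma D_ext T f f1 f2 : deriv_on T f f1 -> (forall t, in_dom T t -> f1 t = f2 t) -> deriv_on T f f2.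
Proof.
  intros H E t Ht eps Heps. destruct (H t Ht eps Heps) as [d [Hd Hh]].
  exists d. split; auto. intros h H1 H2 H3. rewrite <- (E t Ht). apply Hh; auto.
Qed.

Lemma mono T f f' : deriv_on T f f' -> (forall t, in_dom T t -> 0 <= f' t) -> forall t, in_dom T t -> f 0 <= f t.
Proof.
  intros HD Hp t Ht. destruct (proj1 Ht) as [Tp|T0]; [|subst; lra].
  assert (Hc : forall c, 0 <= c <= t -> in_dom T c).
  { intros c Hc. destruct Ht as [_ HT]. split; [lra|]. destruct T; auto; lra. }
  destruct (MVT_cor2 (ext f f') f' 0 t Tp) as [c [Hc1 Hc2]].
  { intros c Hc'. apply (deriv_ext T); auto. }
  assert (H0 : in_dom T 0) by (apply Hc; lra).
  rewrite (ext_dom T f f' t Ht), (ext_dom T f f' 0 H0) in Hc1.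
  assert (0 <= f' c) by (apply Hp, Hc; lra).
  assert (0 <= f' c * (t - 0)) by (apply Rmult_le_pos; lra). lra.
Qed.

Lemma stay_neg T f f' : deriv_on T f f' -> f 0 < 0 -> (forall t, in_dom T t -> f t <> 0) ->
  forall t, in_dom T t -> f t < 0.
Proof.
  intros HD H0 Hn t Ht. destruct (Rlt_or_le (f t) 0) as [|Hge]; auto. exfalso.
  assert (Hgt : 0 < f t) by (destruct Hge; auto; exfalso; apply (Hn t Ht); auto).
  assert (Hc : forall c, 0 <= c <= t -> in_dom T c).
  { intros c Hc. destruct Ht as [_ HT]. split; [lra|]. destruct T; auto; lra. }
  assert (Hd0 : in_dom T 0) by (apply Hc; destruct Ht; lra).
  destruct (proj1 Ht) as [Tp|T0]; [|subst; lra].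
  destruct (IVT_interv (ext f f') 0 t) as [z [Hz1 Hz2]]; auto.
  - intros a Ha. apply derivable_continuous_pt. exists (f' a). apply (deriv_ext T); auto.
  - rewrite (ext_dom T) by auto. auto.
  - rewrite (ext_dom T) by auto. auto.
  - rewrite (ext_dom T) in Hz2 by auto. apply (Hn z); auto.
Qed.

Ltac dstep Dg DK :=
  match goal with
  | |- deriv_on _ (fun t => @?A t + @?B t) _ => eapply D_plus
  | |- deriv_on _ (fun t => @?A t - @?B t) _ => eapply D_minus
  | |- deriv_on _ (fun t => @?A t * @?B t) _ => eapply D_mult
  | |- deriv_on _ (fun t => @?A t / @?B t) _ => eapply D_div
  | |- deriv_on _ (fun t => sg _ _ _) _ => apply Dg; lia
  | |- deriv_on _ (fun t => sK _ _ _) _ => apply DK; lia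
  end.

Theorem mainTheorem7 (C : SC) (Lam : R) (T : option R) (x : R -> State) :
  bianchi_I_VIII C ->
  0 < Lam ->
  match T with Some T' => 0 < T' | None => True end ->
  solves_S C Lam T x ->
  (forall t, in_dom T t ->
     posdef3 (sg (x t)) /\ symmetric3 (sK (x t)) /\ antisymmetric3 (sF (x t)) /\
     0 < srho (x t) /\ 0 <= se (x t) /\ 0 <= sTh00 (x t) /\
     constraint_C1 C Lam (x t) /\ constraint_C2 C (x t) /\ constraint_C3 C (x t) /\ constraint_C4 C (x t)) ->
  Htr (x 0) < 0 ->
  exists dH : R -> R,
    deriv_on T (fun t => Htr (x t)) dH /\
    forall t, in_dom T t ->
      dH t >= KK (x t) - Lam /\
      KK (x t) - Lam >= / 3 * Htr (x t) ^ 2 - Lam /\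
      / 3 * Htr (x t) ^ 2 - Lam >= 0 /\
      Htr (x 0) - Lam * t <= Htr (x t) /\
      Htr (x t) < - sqrt (3 * Lam).
Proof.
  intros HB HL HT HS Hall H0.
  destruct HS as [HS1 [HS2 _]].
  assert (Dg : forall i j, (i<3)%nat -> (j<3)%nat -> deriv_on T (fun t => sg (x t) i j) (fun t => rhs_g (x t) i j))
    by (intros i j Hi Hj; apply (HS1 i j Hi Hj)).
  assert (DK : forall i j, (i<3)%nat -> (j<3)%nat -> deriv_on T (fun t => sK (x t) i j) (fun t => rhs_K C Lam (x t) i j))
    by (intros i j Hi Hj; apply (HS1 i j Hi Hj)).
  set (dH := fun t => 2 * KK (x t) + sum3 (fun i => sum3 (fun j => gi (x t) i j * rhs_K C Lam (x t) i j))).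
  assert (HD : deriv_on T (fun t => Htr (x t)) dH).
  { eapply D_ext.
    - unfold Htr, gi, inv3, det3. ex. repeat dstep Dg DK.
      all: intros t Ht; destruct (Hall t Ht) as [Hp _]; pose proof (det_pos _ Hp) as Hd; unfold det3 in Hd; lra.
    - intros t Ht. destruct (Hall t Ht) as [Hp [HK _]]. pose proof (det_pos _ Hp) as Hd.
      assert (Hs : symmetric3 (sg (x t))) by (destruct Hp; auto).
      unfold dH, KK, Kup, gi, inv3, rhs_g. unfold det3 in *. ex. symrw Hs. symrw HK. symrw_in Hs Hd.
      unfold Rsqr. field. lra. }
  exists dH. split; [exact HD|].
  assert (Hpt : forall t, in_dom T t -> dH t >= KK (x t) - Lam /\ KK (x t) >= / 3 * Htr (x t) ^ 2 /\ Htr (x t) ^ 2 > 3 * Lam).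
  { intros t Ht. destruct (Hall t Ht) as [Hp [HK [_ [Hr [_ [HTh [HC1 _]]]]]]].
    destruct (pw C Lam (x t) HB Hp HK Hr HTh HC1) as [A B].
    split; [exact A|split; [apply KK_ge; auto|exact B]]. }
  assert (Hd0 : in_dom T 0) by (split; [lra|destruct T; auto]).
  assert (Hmono : forall t, in_dom T t -> Htr (x 0) + Lam * 0 <= Htr (x t) + Lam * t).
  { apply (mono T (fun t => Htr (x t) + Lam * t) (fun t => dH t + (0 * t + Lam * 1))).
    - apply D_plus; [exact HD|]. apply D_mult; [apply D_const|apply D_id].
    - intros t Ht. destruct (Hpt t Ht) as [A [B C1]].
      assert (0 <= Htr (x t) ^ 2) by apply pow2_ge_0. lra. }
  set (r := sqrt (3 * Lam)).
  assert (Hr0 : 0 <= r) by apply sqrt_pos.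
  assert (Hr2 : r * r = 3 * Lam) by (apply sqrt_sqrt; lra).
  assert (Hneg : forall t, in_dom T t -> Htr (x t) + r < 0).
  { apply (stay_neg T (fun t => Htr (x t) + r) (fun t => dH t + 0)).
    - apply D_plus; [exact HD|apply D_const].
    - destruct (Hpt 0 Hd0) as [_ [_ B]]. nra.
    - intros t Ht E. destruct (Hpt t Ht) as [_ [_ B]].
      assert (Htr (x t) = - r) by lra. rewrite H in B. nra. }
  intros t Ht. destruct (Hpt t Ht) as [A [B C1]]. pose proof (Hmono t Ht). pose proof (Hneg t Ht).
  repeat split; try lra.
Qed.
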